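(* Let $n$ be a positive integer and let $g_k(x)=\sum_{j=0}^{k}\binom{k}{j}^2\binom{2j}{j}x^j$ denote the Sun polynomials. Then (i) $\displaystyle \frac{1}{n}\sum_{k=0}^{n-1}(4k+3)g_k(x)\in\mathbb{Z}[x]$, i.e. every coefficient of the polynomial $\sum_{k=0}^{n-1}(4k+3)g_k(x)$ is divisible by $n$; (ii) $\displaystyle \sum_{k=0}^{n-1}(8k^2+12k+5)g_k(-1)\equiv 0\pmod{n}$.
   Context: The Sun polynomials are $g_k(x)=\sum_{j=0}^{k}\binom{k}{j}^2\binom{2j}{j}x^j$ for integers $k\ge 0$. *)

(* Defs.v *)
From HB Require Import structures.
From mathcomp Require Import all_boot all_order all_algebra.
Set Implicit Arguments. Unset Strict Implicit. Unset Printing Implicit Defensive.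
Import Order.TTheory GRing.Theory Num.Theory.
Local Open Scope ring_scope.

Definition sun_g (k : nat) : {poly int} :=
  \sum_(j < k.+1) (('C(k, j) ^ 2 * 'C(2 * j, j))%N)%:R *: 'X^j.

(* Main.v *)
Require Import Defs.
From HB Require Import structures.
From mathcomp Require Import all_boot all_order all_algebra.
From mathcomp Require Import ring zify.
Import GRing.Theory Num.Theory.
Local Open Scope ring_scope.


Ltac iring := match goal with |- ?a = ?b => change (@eq int a b); ring end.

Definition Cz (n k : nat) : int := ('C(n, k))%:Z.
Definition sh (f : nat -> int) (i : nat) : int := if i is i'.+1 then f i' else 0.

Lemma mulC_k (k t : nat) :
  k%:Z * Cz k t = t%:Z * Cz k t + (t.+1)%:Z * Cz k t.+1.
Proof.
rewrite /Cz -!PoszM -PoszD; congr Posz.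
rewrite mul_bin_left -mulnDl.
case: (leqP t k) => [htk|hkt]; first by rewrite subnKC.
by rewrite bin_small // !muln0.
Qed.

Lemma step1 (f : int) k m :
  k%:Z * (f * Cz k m) = m%:Z * f * Cz k m + f * (m.+1)%:Z * Cz k m.+1.
Proof.
have h := mulC_k k m.
transitivity (f * (k%:Z * Cz k m)); first by ring.
by rewrite h; ring.
Qed.

Lemma hockey (n t : nat) : \sum_(k < n) Cz k t = Cz n t.+1.
Proof.
elim: n => [|n IH]; first by rewrite big_ord0 /Cz bin0n.
by rewrite big_ord_recr /= IH /Cz binS PoszD addrC.
Qed.

Lemma mul_sum (k j L : nat) (f : nat -> int) : f L = 0 ->
  k%:Z * \sum_(i < L.+1) f i * Cz k (j + i) =
  \sum_(i < L.+1) ((j + i)%:Z * f i + (j + i)%:Z * sh f i) * Cz k (j + i).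
Proof.
move=> fL.
rewrite big_distrr /=.
rewrite (eq_bigr (fun i : 'I_L.+1 => (j + i)%:Z * f i * Cz k (j + i) +
    f i * ((j + i).+1)%:Z * Cz k (j + i).+1)); last first.
  by move=> i _; rewrite step1.
rewrite big_split /=.
rewrite [RHS](eq_bigr (fun i : 'I_L.+1 => (j + i)%:Z * f i * Cz k (j + i) +
    (j + i)%:Z * sh f i * Cz k (j + i))); last by move=> i _; iring.
rewrite big_split /=; congr (_ + _).
rewrite big_ord_recr /= [RHS]big_ord_recl /= fL !mul0r mulr0 addr0 add0r.
apply: eq_bigr => i _; rewrite /bump /= addnS add0n; iring.
Qed.
Lemma bin_tri n a b : (b <= a)%N -> ('C(n, a) * 'C(a, b) = 'C(n, b) * 'C(n - b, a - b))%N.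
Proof.
move=> ba; case: (leqP a n) => an; last first.
  rewrite (bin_small an) mul0n; case: (leqP b n) => bn; last by rewrite bin_small.
  by rewrite [X in (_ * X)%N]bin_small ?muln0 //; lia.
apply/eqP; rewrite -(eqn_pmul2r (_ : 0 < b`! * (a - b)`! * (n - a)`!)%N); last first.
  by rewrite !muln_gt0 !fact_gt0.
have E1 := bin_fact ba; have E2 := bin_fact an.
have bn : (b <= n)%N by lia.
have E4 := bin_fact bn.
have abnb : (a - b <= n - b)%N by lia.
have E3 := bin_fact abnb.
have e : (n - b - (a - b) = n - a)%N by lia.
rewrite e in E3.
apply/eqP.
transitivity ('C(n, a) * ('C(a, b) * (b`! * (a - b)`!)) * (n - a)`!)%N; first by ring.
rewrite E1.
transitivity ('C(n, a) * (a`! * (n - a)`!))%N; first by ring.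
rewrite E2 -E4.
transitivity ('C(n, b) * b`! * ('C(n - b, a - b) * ((a - b)`! * (n - a)`!)))%N; last by ring.
by rewrite E3 mulnA.
Qed.

Lemma Knat k j : ('C(k, j) * 'C(k, j) =
  \sum_(i < j.+1) 'C(j, i) * 'C(j + i, i) * 'C(k, j + i))%N.
Proof.
case: (leqP j k) => jk; last first.
  rewrite bin_small // mul0n big1 // => i _.
  by rewrite (@bin_small k) ?muln0 //; lia.
have V := binomial.Vandermonde j (k - j)%N j; rewrite subnKC // in V.
rewrite -{1}V big_distrl /= (reindex_inj rev_ord_inj) /=.
apply: eq_bigr => i _.
have ij : (i <= j)%N by have := ltn_ord i; lia.
have e1 : (j.+1 - i.+1 = j - i)%N by lia.
have e2 : (j - (j - i) = i)%N by lia.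
rewrite e1 e2 (bin_sub ij).
have T := @bin_tri k (j + i)%N j (leq_addr i j).
have e4 : (j + i - j = i)%N by lia.
rewrite e4 in T.
have e3 : 'C(j + i, j) = 'C(j + i, i).
  have e5 : (j + i - i = j)%N by lia.
  by rewrite -(bin_sub (leq_addl j i)) e5.
rewrite e3 in T.
rewrite -mulnA (mulnC 'C(k - j, i)) -T; ring.
Qed.

Definition X (j i : nat) : int := Cz (2 * j) j * Cz j i * Cz (j + i) i.

Lemma Posz_sum n (F : 'I_n -> nat) : Posz (\sum_(i < n) F i)%N = \sum_(i < n) (F i)%:Z.
Proof.
by rewrite (big_morph Posz PoszD (erefl _)).
Qed.

Lemma Kint k j : Cz k j ^+ 2 * Cz (2 * j) j = \sum_(i < j.+1) X j i * Cz k (j + i).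
Proof.
transitivity (Posz ('C(k, j) * 'C(k, j))%N * Cz (2 * j) j); first by rewrite PoszM expr2.
rewrite Knat Posz_sum big_distrl /=.
apply: eq_bigr => i _; rewrite /X /Cz !PoszM; iring.
Qed.

Lemma X_small j i : (j < i)%N -> X j i = 0.
Proof. by move=> ji; rewrite /X {2}/Cz bin_small // mulr0 mul0r. Qed.

Lemma ext3 (F : nat -> int) j : F j.+1 = 0 -> F j.+2 = 0 ->
  \sum_(i < j.+1) F i = \sum_(i < j.+3) F i.
Proof. by move=> h1 h2; rewrite (big_ord_recr j.+2) (big_ord_recr j.+1) /= h1 h2 !addr0. Qed.

Lemma Kint3 k j : Cz k j ^+ 2 * Cz (2 * j) j = \sum_(i < j.+3) X j i * Cz k (j + i).
Proof.
rewrite Kint (@ext3 (fun i => X j i * Cz k (j + i)) j) //=.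
  by rewrite X_small ?mul0r.
by rewrite X_small ?mul0r.
Qed.

Definition coef1 (j i : nat) : int :=
  (4 * (j + i)%:Z + 3) * X j i + 4 * (j + i)%:Z * sh (X j) i.

Lemma expand1 k j : (4 * k + 3)%N%:Z * (Cz k j ^+ 2 * Cz (2 * j) j) =
  \sum_(i < j.+3) coef1 j i * Cz k (j + i).
Proof.
rewrite Kint3 PoszD PoszM mulrDl -mulrA (@mul_sum k j j.+2 (X j)); last first.
  by rewrite X_small.
rewrite !big_distrr -big_split /=.
apply: eq_bigr => i _; rewrite /coef1; iring.
Qed.

Definition gf (j i : nat) : int := (j + i)%:Z * X j i + (j + i)%:Z * sh (X j) i.

Definition coef2 (j i : nat) : int :=
  8 * ((j + i)%:Z * gf j i + (j + i)%:Z * sh (gf j) i) +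
  12 * gf j i + 5 * X j i.

Lemma expand2 k j : (8 * k ^ 2 + 12 * k + 5)%N%:Z * (Cz k j ^+ 2 * Cz (2 * j) j) =
  \sum_(i < j.+3) coef2 j i * Cz k (j + i).
Proof.
rewrite Kint3 !PoszD !PoszM.
have hx2 : X j j.+2 = 0 by rewrite X_small.
have hx1 : X j j.+1 = 0 by rewrite X_small.
have h1 := @mul_sum k j j.+2 (X j) hx2.
have hg : gf j j.+2 = 0 by rewrite /gf hx2 /= hx1 !mulr0 addr0.
have h2 := @mul_sum k j j.+2 (gf j) hg.
transitivity (8 * (k%:Z * (k%:Z * \sum_(i < j.+3) X j i * Cz k (j + i))) +
  12 * (k%:Z * \sum_(i < j.+3) X j i * Cz k (j + i)) +
  5 * \sum_(i < j.+3) X j i * Cz k (j + i)).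
  by iring.
rewrite h1 h2 !big_distrr -!big_split /=.
apply: eq_bigr => i _; rewrite /coef2 /gf. iring.
Qed.

Definition c1 (j i : nat) : int :=
  2 * Cz (2 * j) j * Cz j.+1 i * Cz (j + i) i + Cz (2 * j).+1 (j + i).+1 * Cz (j + i) i ^+ 2.

Lemma cert1 (j s A C0 C1 Cc Cp B D E : int) :
  (j + s + 1) * Cp = (s + 1) * Cc ->
  (j + s + 2) * D = (2 * j + 1) * E ->
  E * Cc = A * C0 ->
  B = C0 + C1 ->
  (s + 1) * C0 = (j - s) * C1 ->
  (4 * (j + s + 1) + 3) * (A * C0 * Cc) + 4 * (j + s + 1) * (A * C1 * Cp) =
  (j + s + 2) * (2 * A * B * Cc + D * Cc ^+ 2).
Proof.
move=> h1 h2 h3 h4 h5.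
have H : 4 * A * C1 * ((j + s + 1) * Cp - (s + 1) * Cc)
  - Cc ^+ 2 * ((j + s + 2) * D - (2 * j + 1) * E)
  - (2 * j + 1) * Cc * (E * Cc - A * C0)
  - 2 * (j + s + 2) * A * Cc * (B - (C0 + C1))
  + 2 * A * Cc * ((s + 1) * C0 - (j - s) * C1) = 0.
  by rewrite h1 h2 h3 h4 h5; ring.
rewrite -[LHS]subr0 -H; ring.
Qed.

Lemma sub_bin j s : (s.+1)%:Z * Cz j s.+1 = (j%:Z - s%:Z) * Cz j s.
Proof.
case: (leqP s j) => sj.
  rewrite subzn // /Cz -!PoszM; congr Posz; exact: mul_bin_left.
by rewrite /Cz !bin_small ?mulr0 //; lia.
Qed.

Lemma coef1_id j i : coef1 j i = ((j + i).+1)%:Z * c1 j i.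
Proof.
case: i => [|s].
  rewrite /coef1 /c1 /X /= !addn0 /Cz !bin0.
  have h := mul_bin_diag (2 * j).+1 j; rewrite /= in h.
  have h' : (j.+1)%:Z * Cz (2 * j).+1 j.+1 = ((2 * j).+1)%:Z * Cz (2 * j) j.
    by rewrite /Cz -!PoszM h.
  move: h'; rewrite /Cz.
  move: (Posz 'C((2 * j).+1, j.+1)) (Posz 'C(2 * j, j)) => D A h'.
  have e1 : (j.+1)%:Z = j%:Z + 1 by lia.
  have e2 : ((2 * j).+1)%:Z = 2 * j%:Z + 1 by lia.
  rewrite e1 e2 in h' *.
  apply/eqP; rewrite -subr_eq0; apply/eqP.
  transitivity (- ((j%:Z + 1) * D - (2 * j%:Z + 1) * A)); first by ring.
  by rewrite h' subrr oppr0.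
have e1 : (j + s.+1)%:Z = j%:Z + s%:Z + 1 by lia.
have e2 : ((j + s.+1).+1)%:Z = j%:Z + s%:Z + 2 by lia.
rewrite /coef1 /c1 /X /= e1 e2.
apply: (@cert1 _ _ _ _ _ _ _ _ _ (Cz (2 * j) (j + s.+1))).
- have h := mul_bin_diag (j + s.+1) s; rewrite addnS /= in h.
  rewrite -e1 /Cz -!PoszM addnS h.
  by congr (Posz (_ * _)); lia.
- have e3 : 2 * j%:Z + 1 = ((2 * j).+1)%:Z by lia.
  rewrite -e2 e3 /Cz -!PoszM; congr Posz.
  by rewrite mul_bin_diag.
- have T := @bin_tri (2 * j) (j + s.+1) j (leq_addr _ _).
  have e4 : (2 * j - j = j)%N by lia.
  have e5 : (j + s.+1 - j = s.+1)%N by lia.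
  rewrite e4 e5 in T.
  have e6 : 'C(j + s.+1, j) = 'C(j + s.+1, s.+1).
    have e7 : (j + s.+1 - s.+1 = j)%N by lia.
    by rewrite -(bin_sub (leq_addl j s.+1)) e7.
  rewrite e6 in T.
  by rewrite /Cz -!PoszM T.
- by rewrite /Cz binS PoszD addrC.
- by rewrite -sub_bin; congr (_ * _); lia.
Qed.

Definition I2 (j i : nat) : int :=
  (2 * j%:Z ^+ 2 + 13 * j%:Z + 9) * (Cz (2 * j) j * Cz j.+1 i * Cz (j + i) i)
  - 2 * (j%:Z + 2) * (j%:Z + 1 - i%:Z) * (Cz (2 * j) j * Cz j.+2 i * Cz (j + i) i).

Lemma cert2 (j s A C0 C1 C2 Cc Cp1 Cp2 B1 B2 Ap W1 Wc : int) :
  (j + s + 2) * Cp1 = (s + 2) * Cc ->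
  (j + s + 1) * Cp2 = (s + 1) * Cp1 ->
  B1 = C0 + C1 ->
  B2 = C0 + 2 * C1 + C2 ->
  W1 = C1 + C2 ->
  (j + 1) * Ap = 2 * (2 * j + 1) * A ->
  (j + 1) * Wc = (s + 2) * Cc ->
  (s + 2) * C0 = (j - (s + 1)) * C1 ->
  (s + 1) * C1 = (j - s) * C2 ->
  8 * ((j + s + 2) * ((j + s + 2) * (A * C0 * Cc) + (j + s + 2) * (A * C1 * Cp1)) +
       (j + s + 2) * ((j + s + 1) * (A * C1 * Cp1) + (j + s + 1) * (A * C2 * Cp2))) +
  12 * ((j + s + 2) * (A * C0 * Cc) + (j + s + 2) * (A * C1 * Cp1)) + 5 * (A * C0 * Cc) =
  (j + s + 3) * ((2 * j ^+ 2 + 13 * j + 9) * (A * B1 * Cc)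
     - 2 * (j + 2) * (j + 1 - (s + 2)) * (A * B2 * Cc))
  + j ^+ 2 * (A * C0 * Cc) + (j + 1) ^+ 2 * (Ap * W1 * Wc).
Proof.
move=> f1 f2 f3 f4 f5 f6 f7 r1 r2.
set t := j + s + 2.
set K := 2 * j ^+ 2 + 13 * j + 9.
set lam1 := 3 + 3 * j - 2 * j ^+ 2 + 4 * (s + 2) - 2 * (s + 2) * j.
set lam2 := -2 - 4 * j - 2 * j ^+ 2 + 4 * (s + 2) - 2 * (s + 2) * j.
have H : (8 * t + 8 * (j + s + 1) + 12) * A * C1 * (t * Cp1 - (s + 2) * Cc)
  + 8 * t * A * C2 * ((j + s + 1) * Cp2 - (s + 1) * Cp1)
  + 8 * (s + 1) * A * C2 * (t * Cp1 - (s + 2) * Cc)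
  - (t + 1) * K * A * Cc * (B1 - (C0 + C1))
  + (t + 1) * 2 * (j + 2) * (j - s - 1) * A * Cc * (B2 - (C0 + 2 * C1 + C2))
  - ((j + 1) * Ap - 2 * (2 * j + 1) * A) * (j + 1) * Wc * W1
  - 2 * (2 * j + 1) * A * W1 * ((j + 1) * Wc - (s + 2) * Cc)
  - 2 * (2 * j + 1) * (s + 2) * A * Cc * (W1 - (C1 + C2))
  + A * Cc * (lam1 * ((s + 2) * C0 - (j - (s + 1)) * C1) + lam2 * ((s + 1) * C1 - (j - s) * C2))
  = 0.
  rewrite /t f1 f2 f6 f7 r1 r2 -f3 -f4 -f5; ring.
rewrite -[LHS]subr0 -H /t /K /lam1 /lam2; ring.
Qed.

Lemma Ap_id j : (j.+1)%:Z * Cz (2 * j.+1) j.+1 = 2 * ((2 * j).+1)%:Z * Cz (2 * j) j.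
Proof.
have e : (2 * j.+1 = (2 * j).+2)%N by lia.
rewrite e.
have ha := mul_bin_diag (2 * j).+2 j; rewrite /= in ha.
have hs : 'C((2 * j).+1, j) = 'C((2 * j).+1, j.+1).
  have e2 : ((2 * j).+1 - j.+1 = j)%N by lia.
  have le : (j.+1 <= (2 * j).+1)%N by lia.
  by rewrite -(bin_sub le) e2.
rewrite hs in ha.
have hb := mul_bin_diag (2 * j).+1 j; rewrite /= in hb.
have ha' : (j.+1)%:Z * Cz (2 * j).+2 j.+1 = ((2 * j).+2)%:Z * Cz (2 * j).+1 j.+1.
  by rewrite /Cz -!PoszM ha.
have hb' : (j.+1)%:Z * Cz (2 * j).+1 j.+1 = ((2 * j).+1)%:Z * Cz (2 * j) j.
  by rewrite /Cz -!PoszM hb.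
rewrite ha'.
have e3 : ((2 * j).+2)%:Z = 2 * (j.+1)%:Z by lia.
rewrite e3 -mulrA hb'; ring.
Qed.

Lemma coef2_id j i : coef2 j i =
  ((j + i).+1)%:Z * I2 j i + (j%:Z) ^+ 2 * X j i + ((j.+1)%:Z) ^+ 2 * sh (X j.+1) i.
Proof.
case: i => [|[|s]].
- rewrite /coef2 /gf /I2 /X /= !addn0 /Cz !bin0.
  have e1 : (j.+1)%:Z = j%:Z + 1 by lia.
  rewrite e1; ring.
- rewrite /coef2 /gf /I2 /X /= ?addn0 /Cz ?bin0 ?bin1 ?addn1.
  have hA := Ap_id j; rewrite /Cz in hA.
  move: hA.
  move: (Posz 'C(2 * j.+1, j.+1)) (Posz 'C(2 * j, j)) => Ap A hA.
  have e1 : (j.+1)%:Z = j%:Z + 1 by lia.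
  have e2 : (j.+2)%:Z = j%:Z + 2 by lia.
  have e3 : ((2 * j).+1)%:Z = 2 * j%:Z + 1 by lia.
  have e4 : ((j.+1).+1)%:Z = j%:Z + 2 by lia.
  rewrite ?e4 ?e2 ?e1 ?e3 in hA *.
  apply/eqP; rewrite -subr_eq0; apply/eqP.
  transitivity (- (j%:Z + 1) * ((j%:Z + 1) * Ap - 2 * (2 * j%:Z + 1) * A)); first by ring.
  by rewrite hA subrr mulr0.
- rewrite /coef2 /gf /I2 /X /=.
  have e1 : (j + s.+2)%:Z = j%:Z + s%:Z + 2 by lia.
  have e2 : (j + s.+1)%:Z = j%:Z + s%:Z + 1 by lia.
  have e3 : ((j + s.+2).+1)%:Z = j%:Z + s%:Z + 3 by lia.
  have e4 : (j.+1)%:Z = j%:Z + 1 by lia.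
  have e5 : (s.+2)%:Z = s%:Z + 2 by lia.
  have e6 : (j.+1 + s.+1 = j + s.+2)%N by lia.
  rewrite e1 e2 e3 e4 e5 e6.
  apply: cert2.
  + rewrite -e1 -e5 /Cz -!PoszM; congr Posz.
    have := mul_bin_diag (j + s.+2) s.+1.
    by rewrite [in (j + s.+2).-1]addnS.
  + have e7 : (s%:Z + 1) = (s.+1)%:Z by lia.
    rewrite -e2 e7 /Cz -!PoszM; congr Posz.
    have := mul_bin_diag (j + s.+1) s.
    by rewrite [in (j + s.+1).-1]addnS.
  + by rewrite /Cz binS PoszD addrC.
  + by rewrite /Cz binS PoszD binS binS !PoszD; ring.
  + by rewrite /Cz binS PoszD addrC.
  + rewrite -e4 Ap_id.
    have e8 : ((2 * j).+1)%:Z = 2 * j%:Z + 1 by lia.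
    by rewrite e8.
  + rewrite -e4 -e5 /Cz -!PoszM; congr Posz.
    have := mul_bin_left (j + s.+2) s.+1.
    have e9 : (j + s.+2 - s.+1 = j.+1)%N by lia.
    by rewrite e9.
  + have := sub_bin j s.+1.
    have e10 : (s.+1)%:Z = s%:Z + 1 by lia.
    by rewrite e5 e10.
  + have := sub_bin j s.
    have e10 : (s.+1)%:Z = s%:Z + 1 by lia.
    by rewrite e10.
Qed.

Lemma mbd_z n m : ((m.+1)%:Z * Cz n m.+1) = n%:Z * Cz n.-1 m.
Proof. by rewrite /Cz -!PoszM mul_bin_diag. Qed.

Lemma sum_shift (n j : nat) (F : nat -> int) :
  \sum_(i < j.+3) (\sum_(k < n) F i * Cz k (j + i)) =
  \sum_(i < j.+3) F i * Cz n (j + i).+1.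
Proof. by apply: eq_bigr => i _; rewrite -big_distrr /= hockey. Qed.

Lemma sum1 n j : \sum_(k < n) (4 * k + 3)%N%:Z * (Cz k j ^+ 2 * Cz (2 * j) j) =
  n%:Z * \sum_(i < j.+3) c1 j i * Cz n.-1 (j + i).
Proof.
rewrite (eq_bigr (fun k : 'I_n => \sum_(i < j.+3) coef1 j i * Cz k (j + i)));
  last by move=> k _; rewrite expand1.
rewrite exchange_big /= sum_shift big_distrr /=.
apply: eq_bigr => i _; rewrite coef1_id.
transitivity (c1 j i * (((j + i).+1)%:Z * Cz n (j + i).+1)); first by iring.
rewrite mbd_z; iring.
Qed.

Definition U (n j : nat) : int := (j%:Z) ^+ 2 * \sum_(i < j.+3) X j i * Cz n (j + i).+1.

Lemma shift_U n j :
  ((j.+1)%:Z) ^+ 2 * \sum_(i < j.+3) sh (X j.+1) i * Cz n (j + i).+1 = U n j.+1.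
Proof.
rewrite /U; congr (_ * _).
rewrite big_ord_recl /= mul0r add0r.
rewrite (big_ord_recr j.+3) (big_ord_recr j.+2) /=.
rewrite !X_small // !mul0r !addr0.
apply: eq_bigr => i _; rewrite /bump /= add1n addnS addSn.
done.
Qed.

Lemma sum2 n j : \sum_(k < n) (8 * k ^ 2 + 12 * k + 5)%N%:Z * (Cz k j ^+ 2 * Cz (2 * j) j) =
  n%:Z * \sum_(i < j.+3) I2 j i * Cz n.-1 (j + i) + U n j + U n j.+1.
Proof.
rewrite (eq_bigr (fun k : 'I_n => \sum_(i < j.+3) coef2 j i * Cz k (j + i)));
  last by move=> k _; rewrite expand2.
rewrite exchange_big /= sum_shift -shift_U /U !big_distrr -!big_split /=.
apply: eq_bigr => i _; rewrite coef2_id.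
transitivity (I2 j i * (((j + i).+1)%:Z * Cz n (j + i).+1) +
  (j%:Z) ^+ 2 * (X j i * Cz n (j + i).+1) +
  ((j.+1)%:Z) ^+ 2 * (sh (X j.+1) i * Cz n (j + i).+1)); first by iring.
rewrite mbd_z; iring.
Qed.

Lemma telescope (F : nat -> int) m :
  \sum_(j < m) (-1) ^+ j * (F j + F j.+1) = F 0%N - (-1) ^+ m * F m.
Proof.
elim: m => [|m IH]; first by rewrite big_ord0 expr0 mul1r subrr.
rewrite big_ord_recr /= IH exprS; ring.
Qed.

Lemma U0 n : U n 0 = 0.
Proof. by rewrite /U expr2 mul0r. Qed.

Lemma Un n : U n n = 0.
Proof.
rewrite /U big1 ?mulr0 // => i _.
by rewrite /Cz bin_small ?mulr0 //; lia.
Qed.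

Lemma sun_poly k : sun_g k = \poly_(j < k.+1) ((('C(k, j) ^ 2 * 'C(2 * j, j))%N)%:R : int).
Proof. by rewrite poly_def. Qed.

Lemma sun_coef k i : (sun_g k)`_i = Cz k i ^+ 2 * Cz (2 * i) i.
Proof.
rewrite sun_poly coef_poly.
case: ifP => hi.
  by rewrite natrM natrX !natz.
by rewrite /Cz bin_small ?expr2 ?mul0r //; lia.
Qed.

Lemma sun_eval k n : (k < n)%N ->
  (sun_g k).[-1] = \sum_(j < n) (-1) ^+ j * (Cz k j ^+ 2 * Cz (2 * j) j).
Proof.
move=> kn.
rewrite sun_poly horner_poly.
rewrite (eq_bigr (fun j : 'I_k.+1 => (-1) ^+ j * (Cz k j ^+ 2 * Cz (2 * j) j)));
  last by move=> j _; rewrite natrM natrX !natz mulrC.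
rewrite (big_ord_widen _ (fun j => (-1) ^+ j * (Cz k j ^+ 2 * Cz (2 * j) j)) kn).
rewrite big_mkcond /=.
apply: eq_bigr => j _.
case: ifP => hj //.
by rewrite /Cz bin_small ?expr2 ?mul0r ?mulr0 //; lia.
Qed.


Theorem theorem1 (n : nat) (hn : (0 < n)%N) :
  (forall i : nat,
     (n%:Z %| (\sum_(k < n) ((4 * k + 3)%N)%:R *: sun_g k)`_i)%Z)
  /\
  (n%:Z %| \sum_(k < n) ((8 * k ^ 2 + 12 * k + 5)%N)%:R * (sun_g k).[-1])%Z.
Proof.
split.
  move=> i.
  rewrite coef_sum.
  rewrite (eq_bigr (fun k : 'I_n => (4 * k + 3)%N%:Z * (Cz k i ^+ 2 * Cz (2 * i) i)));
    last by move=> k _; rewrite coefZ sun_coef natz.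
  by rewrite sum1 dvdz_mulr.
rewrite (eq_bigr (fun k : 'I_n => \sum_(j < n) (-1) ^+ j *
   ((8 * k ^ 2 + 12 * k + 5)%N%:Z * (Cz k j ^+ 2 * Cz (2 * j) j))));
  last by move=> k _; rewrite (@sun_eval k n (ltn_ord k)) natz big_distrr /=;
    apply: eq_bigr => j _; iring.
rewrite exchange_big /=.
rewrite (eq_bigr (fun j : 'I_n => (-1) ^+ j * (n%:Z * \sum_(i < j.+3) I2 j i * Cz n.-1 (j + i))
   + (-1) ^+ j * (U n j + U n j.+1)));
  last by move=> j _; rewrite -big_distrr /= sum2; iring.
rewrite big_split /= telescope U0 Un mulr0 subr0 ?addr0.
rewrite (eq_bigr (fun j : 'I_n => n%:Z * ((-1) ^+ j * \sum_(i < j.+3) I2 j i * Cz n.-1 (j + i))));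
  last by move=> j _; iring.
by rewrite -big_distrr /= dvdz_mulr.
Qed.
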